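(* Let $S$ be an infinite set, $\mathcal{F}\subseteq 2^S$ nontrivial and closed under finite unions, and let $(C,\mathbf{A})$ be a conditional classification problem with $\mathbf{A}=(A_1,\dots,A_k)$. Then the following are equivalent: (i) $\mathbf{A}\in\mathit{ccore}_k(C,\mathcal{F})$; (ii) for all $1\le i\le k$: $A_i\notin\mathit{cclass}_1(C,\mathcal{F})$ and $A_i\in\mathit{ccohesive}(S\setminus C,\mathcal{F})$.
   Context: $\mathcal{F}$ is nontrivial if $\emptyset,S\in\mathcal{F}$ and for all $Q\in\mathcal{F}$ and finite $E\subseteq S$ both $Q\cup E\in\mathcal{F}$ and $Q\setminus E\in\mathcal{F}$. A classification problem is a vector $(A_1,\dots,A_k)$, $k\ge1$, of pairwise disjoint infinite subsets of $S$, of length $k$. A conditional classification problem is a pair $(C,\mathbf{A})$ with $C\subseteq S$, $\mathbf{A}$ a classification problem and $C$ disjoint from all components of $\mathbf{A}$. For vectors $\mathbf{B}=(B_1,\dots,B_m)$, $\mathbf{Q}=(Q_1,\dots,Q_k)$, $\mathbf{B}\le\mathbf{Q}$ means $1\le m\le k$ and there is an injective $\sigma:\{1,\dots,m\}\to\{1,\dots,k\}$ with $B_i\subseteq Q_{\sigma(i)}$. An $\mathcal{F}$-partition is a vector of pairwise disjoint members of $\mathcal{F}$ whose union is $S$. $\mathit{cclass}_k(C,\mathcal{F})$ is the set of classification problems $\mathbf{A}$ of length $k$ such that $(C,\mathbf{A})$ is a conditional classification problem and there is an $\mathcal{F}$-partition $(Q_0,Q_1,\dots,Q_k)$ with $C\subseteq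 Q_0$ and $\mathbf{A}\le(Q_1,\dots,Q_k)$ (a single set $A$ is identified with the vector $(A)$). $\mathit{ccore}_k(C,\mathcal{F})$ is the set of classification problems $\mathbf{A}$ of length $k$ with $(C,\mathbf{A})$ a conditional classification problem such that every classification problem $\mathbf{A}'\le\mathbf{A}$ (any length $\ge1$) satisfies $\mathbf{A}'\notin\mathit{cclass}_{|\mathbf{A}'|}(C,\mathcal{F})$. For $D\subseteq S$, $A\in\mathit{ccohesive}(D,\mathcal{F})$ iff $A$ is infinite and for every $Q\subseteq D$ with $Q\in\mathcal{F}$ and $S\setminus Q\in\mathcal{F}$, either $A\cap Q$ or $A\setminus Q$ is finite. *)

(* Defs.v *)
(* sets are mathcomp-classical `set T`; the ground set S is
   the full set [set: T] of a type T. Vectors of length k are maps 'I_k -> set T. *)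
From mathcomp Require Import all_boot.
From mathcomp Require Import boolp classical_sets cardinality.
Set Implicit Arguments. Unset Strict Implicit. Unset Printing Implicit Defensive.
Local Open Scope classical_set_scope.

Section Defs.
Variable T : Type.

Definition nontrivial (F : set (set T)) : Prop :=
  F set0 /\ F setT /\
  forall Q E, F Q -> finite_set E -> F (Q `|` E) /\ F (Q `\` E).

Definition closed_fin_union (F : set (set T)) : Prop :=
  forall Q1 Q2, F Q1 -> F Q2 -> F (Q1 `|` Q2).

Definition class_problem (k : nat) (A : 'I_k -> set T) : Prop :=
  (0 < k)%N /\ (forall i, infinite_set (A i)) /\
  (forall i j, i != j -> A i `&` A j = set0).

Definition cond_class_problem (C : set T) (k : nat) (A : 'I_k -> set T) : Prop :=
  class_problem A /\ (forall i, C `&` A i = set0).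

Definition vec_le (m k : nat) (B : 'I_m -> set T) (Q : 'I_k -> set T) : Prop :=
  (0 < m)%N /\ (m <= k)%N /\
  exists sigma : 'I_m -> 'I_k, injective sigma /\ forall i, B i `<=` Q (sigma i).

(* F-partition (Q_0, Q_1, ..., Q_k), indexed by 'I_k.+1 with Q_0 at ord0 *)
Definition F_partition (F : set (set T)) (n : nat) (Q : 'I_n -> set T) : Prop :=
  (forall i, F (Q i)) /\ (forall i j, i != j -> Q i `&` Q j = set0) /\
  (forall x, exists i, Q i x).

Definition cclass (k : nat) (C : set T) (F : set (set T)) (A : 'I_k -> set T) : Prop :=
  cond_class_problem C A /\
  exists Q : 'I_k.+1 -> set T, F_partition F Q /\ C `<=` Q ord0 /\
    vec_le A (fun i : 'I_k => Q (lift ord0 i)).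

Definition ccore (k : nat) (C : set T) (F : set (set T)) (A : 'I_k -> set T) : Prop :=
  cond_class_problem C A /\
  forall (m : nat) (A' : 'I_m -> set T),
    class_problem A' -> vec_le A' A -> ~ cclass C F A'.

Definition ccohesive (D : set T) (F : set (set T)) (A : set T) : Prop :=
  infinite_set A /\
  forall Q, Q `<=` D -> F Q -> F (~` Q) ->
    finite_set (A `&` Q) \/ finite_set (A `\` Q).

End Defs.

(* Main.v *)
Require Import Defs.
From mathcomp Require Import all_boot.
From mathcomp Require Import boolp classical_sets cardinality.
Local Open Scope classical_set_scope.

Lemma disjE (T : Type) (P R : set T) x : P `&` R = set0 -> P x -> R x -> False.
Proof. move=> h px rx; have : (P `&` R) x by split. by rewrite h. Qed.
Arguments disjE {T P R x}.

Lemma Fbig (T : Type) (F : set (set T)) (I : eqType) (G : I -> set T) (s : seq I) :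
  closed_fin_union F -> F set0 -> (forall i, i \in s -> F (G i)) ->
  F [set x | exists2 i, i \in s & G i x].
Proof.
move=> cu F0; elim: s => [|a s IH] hs.
  rewrite (_ : [set x | _] = set0) //; apply/seteqP; split => x //= [i].
  by rewrite in_nil.
rewrite (_ : [set x | _] = G a `|` [set x | exists2 i, i \in s & G i x]).
  apply: cu; first by apply: hs; rewrite inE eqxx.
  by apply: IH => i hi; apply: hs; rewrite inE hi orbT.
apply/seteqP; split => x /=.
  move=> [i]; rewrite inE => /orP [/eqP -> | hi] g; first by left.
  by right; exists i.
case=> [g|[i hi g]]; first by exists a; rewrite ?inE ?eqxx.
by exists i; rewrite // inE hi orbT.
Qed.

Lemma mk_cclass1 (T : Type) (F : set (set T)) (C B P0 Q1 : set T) :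
  C `&` B = set0 -> infinite_set B -> F P0 -> F Q1 -> P0 `&` Q1 = set0 ->
  (forall x, P0 x \/ Q1 x) -> C `<=` P0 -> B `<=` Q1 ->
  cclass C F (fun _ : 'I_1 => B).
Proof.
move=> CB iB FP FQ dPQ cov CP BQ; split.
  split; last by [].
  split; first by [].
  split; first by [].
  by move=> a b; rewrite (ord1 a) (ord1 b) eqxx.
exists (fun i : 'I_2 => if i == ord0 then P0 else Q1); split.
  split; first by move=> i; case: ifP.
  split.
    have e : forall i : 'I_2, i = ord0 \/ i = lift ord0 ord0.
      by case=> [[|[|//]] ?]; [left|right]; apply: val_inj.
    move=> i j; case: (e i) => ->; case: (e j) => -> //=; rewrite ?eqxx //.
    by rewrite setIC.
  move=> x; case: (cov x) => h; first by exists ord0.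
  by exists (lift ord0 ord0).
split; first by [].
split; first by [].
split; first by [].
exists id; split; first by [].
by move=> i /=.
Qed.

Theorem theorem4p4 (T : Type) (F : set (set T)) (C : set T) (k : nat)
    (A : 'I_k -> set T) :
  infinite_set [set: T] -> nontrivial F -> closed_fin_union F ->
  cond_class_problem C A ->
  (ccore C F A <->
   forall i : 'I_k,
     ~ cclass C F (fun _ : 'I_1 => A i) /\ ccohesive (~` C) F (A i)).
Proof.
move=> _ [F0 [FT Ffin]] cu ccp; have [[k0 [infA disjA]] CA] := ccp; split.
  move=> [_ H] i.
  have k1 : (1 <= k)%N by apply: leq_ltn_trans (leq0n i) (ltn_ord i).
  have vle : forall B : set T, B `<=` A i -> vec_le (fun _ : 'I_1 => B) A.
    move=> B hB; split; first by [].
    split; first by [].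
    exists (fun _ => i); split; last by [].
    by move=> a b _; rewrite (ord1 a) (ord1 b).
  have cp1 : forall B : set T, infinite_set B -> class_problem (fun _ : 'I_1 => B).
    move=> B iB; split; first by [].
    split; first by [].
    by move=> a b; rewrite (ord1 a) (ord1 b) eqxx.
  split.
    by move=> hc; apply: (H 1 _ (cp1 _ (infA i)) (vle _ (fun x h => h)) hc).
  split; first exact: infA.
  move=> Q hQ FQ FnQ.
  case: (pselect (finite_set (A i `&` Q))) => h1; first by left.
  case: (pselect (finite_set (A i `\` Q))) => h2; first by right.
  exfalso; apply: (H 1 _ (cp1 _ h1) (vle _ (fun x h => proj1 h))).
  apply: (@mk_cclass1 T F C _ (~` Q) Q) => //.
  - apply/seteqP; split => x // [cx [ax _]]; exfalso; exact: (disjE (CA i) cx ax).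
  - by apply/seteqP; split => x // [].
  - by move=> x; case: (pselect (Q x)) => h; [right|left].
  - by move=> x cx qx; exact: (hQ x qx cx).
move=> H; rewrite /ccore; split; first exact: ccp.
move=> m A' cpA' [m0 [mk [tau [tauinj sub]]]]
  [ccpA' [Q [[FQ [disjQ covQ]] [CQ0 [_ [_ [sig [_ subQ]]]]]]]].
set j := Ordinal m0.
set i := tau j.
set s := lift ord0 (sig j).
have sub1 : A' j `<=` A i by apply: sub.
have sub2 : A' j `<=` Q s by apply: subQ.
have sn0 : s != ord0 by rewrite eq_sym neq_lift.
have QsC : Q s `<=` ~` C.
  by move=> x qx cx; apply: (disjE (disjQ _ _ sn0) qx (CQ0 _ cx)).
have FnQ : F (~` Q s).
  rewrite (_ : ~` Q s = [set x | exists2 t, t \in filter (fun t => t != s) (enum 'I_m.+1) & Q t x]).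
    by apply: Fbig => // t _; apply: FQ.
  apply/seteqP; split => x /=.
    move=> nq; have [t qt] := covQ x; exists t => //.
    rewrite mem_filter mem_enum andbT; apply/eqP => ets; apply: nq; by rewrite -ets.
  move=> [t]; rewrite mem_filter => /andP [nts _] qt qs.
  exact: (disjE (disjQ _ _ nts) qt qs).
have [infAi cohA] := (H i).2.
have [[_ [infA' _]] _] := ccpA'.
case: (cohA (Q s) QsC (FQ s) FnQ) => hfin.
  apply: (infA' j); apply: sub_finite_set hfin => x hx; split; [exact: sub1|exact: sub2].
apply: (H i).1.
have [FU FD] := Ffin _ _ FnQ hfin.
have [FU' _] := Ffin _ _ (FQ s) hfin.
apply: (@mk_cclass1 T F C _ (~` Q s `\` (A i `\` Q s)) (Q s `|` (A i `\` Q s))) => //.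
- apply/seteqP; split => x // [[nq ne] [qx|ex]] //.
- move=> x; case: (pselect (Q s x)) => h; first by right; left.
  case: (pselect (A i x)) => h'; first by right; right.
  by left; split => // [[]].
- move=> x cx; split; first by move=> qx; exact: (QsC x qx cx).
  by move=> [ax _]; exact: (disjE (CA i) cx ax).
- by move=> x ax; case: (pselect (Q s x)) => h; [left|right].
Qed.
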